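(* Let $N\ge2$ be even and let $\mathcal M=(M_{ij})_{1\le i<j\le N}$ be a family of $\binom N2$ real symmetric $2\times2$ matrices such that $Y=\Psi(\mathcal M)\in SDD_N$ and $\phi_{SDD}(\mathcal M)$ is finite. Then there exist $N-1$ matrices $Z_1,\dots,Z_{N-1}\succ0$ such that $Y=\sum_{k=1}^{N-1}Z_k$ and $\phi_{SDD}(\mathcal M)=\sum_{k=1}^{N-1}\log\det Z_k$.
   Context: $\Psi(\mathcal M)=\sum_{i<j}\Psi_{ij}(M_{ij})$, where $\Psi_{ij}(M)$ is the $N\times N$ matrix with entries $(i,i),(i,j),(j,i),(j,j)$ equal to $M(1,1),M(1,2),M(2,1),M(2,2)$ and zeros elsewhere. $\phi_{SDD}(\mathcal M)=\sum_{i<j}\log\big(M_{ij}(1,1)M_{ij}(2,2)-M_{ij}(1,2)^2\big)$, which is finite exactly when every $M_{ij}\succ0$. $SDD_N$: matrices $DYD$ with $D$ positive diagonal and $Y$ diagonally dominant ($Y(i,i)\ge\sum_{j\ne i}|Y(i,j)|$ for all $i$). *)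

(* Defs.v *)
From HB Require Import structures.
From mathcomp Require Import all_boot all_order all_algebra.
From mathcomp Require Import all_classical all_reals all_analysis.
Set Implicit Arguments. Unset Strict Implicit. Unset Printing Implicit Defensive.
Import Order.TTheory GRing.Theory Num.Theory.
Local Open Scope ring_scope.

Definition symmetric_mx (R : realType) (n : nat) (A : 'M[R]_n) : Prop :=
  A^T = A.

Definition posdef (R : realType) (n : nat) (A : 'M[R]_n) : Prop :=
  symmetric_mx A /\
  forall v : 'cV[R]_n, v != 0 -> 0 < (v^T *m A *m v) ord0 ord0.

Definition Psi_ij (R : realType) (N : nat) (i j : 'I_N) (M : 'M[R]_2) : 'M[R]_N :=
  \matrix_(a < N, b < N)
    (if (a == i) && (b == i) then M ord0 ord0
     else if (a == i) && (b == j) then M ord0 ord_max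
     else if (a == j) && (b == i) then M ord_max ord0
     else if (a == j) && (b == j) then M ord_max ord_max
     else 0).

(* A family (M_ij)_{i<j} is given as a function on pairs; only i < j matters. *)
Definition Psi (R : realType) (N : nat) (M : 'I_N -> 'I_N -> 'M[R]_2) : 'M[R]_N :=
  \sum_(i < N) \sum_(j < N | (i < j)%N) Psi_ij i j (M i j).

Definition phi_SDD (R : realType) (N : nat) (M : 'I_N -> 'I_N -> 'M[R]_2) : R :=
  \sum_(i < N) \sum_(j < N | (i < j)%N)
     ln (M i j ord0 ord0 * M i j ord_max ord_max - M i j ord0 ord_max ^+ 2).

Definition diag_dominant (R : realType) (N : nat) (Y : 'M[R]_N) : Prop :=
  forall i : 'I_N, \sum_(j < N | j != i) `|Y i j| <= Y i i.

Definition SDD (R : realType) (N : nat) (X : 'M[R]_N) : Prop :=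
  exists (d : 'I_N -> R) (Y : 'M[R]_N),
    (forall i, 0 < d i) /\ diag_dominant Y /\
    X = diag_mx (\row_i d i) *m Y *m diag_mx (\row_i d i).

(* Main.v *)
Require Import Defs.
From HB Require Import structures.
From mathcomp Require Import all_boot all_order all_algebra.
From mathcomp Require Import all_classical all_reals all_analysis.
From mathcomp Require Import zify ring lra.
Import Order.TTheory GRing.Theory Num.Theory.

Section Arith.
Variable m : nat.
Hypothesis hm : odd m.

Lemma m_gt0 : (0 < m)%N. Proof. by case: m hm. Qed.

Lemma dbl_inj a b : (a < m)%N -> (b < m)%N -> a.*2 = b.*2 %[mod m] -> a = b.
Proof.
wlog hab : a b / (a <= b)%N => [W ha hb e|ha hb].
  by case: (leqP a b) => h; [apply: W | symmetry; apply: W => //; exact: ltnW].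
move/eqP; rewrite eq_sym eqn_mod_dvd ?leq_double // -doubleB -muln2.
rewrite Gauss_dvdl ?coprimen2 //.
case: (posnP (b - a)) => [h _|h /(dvdn_leq h) hle]; first by lia.
by lia.
Qed.

Definition hh k := if odd k then (k + m)./2 else k./2.

Lemma hh_lt k : (k < m)%N -> (hh k < m)%N.
Proof. rewrite /hh; case: (odd k) => h; lia. Qed.

Lemma hh_dbl k : (hh k).*2 = k %[mod m].
Proof.
rewrite /hh; case hk: (odd k).
  rewrite halfK oddD hk hm /= subn0. by rewrite modnDr.
by rewrite halfK hk subn0.
Qed.

Definition pn k x :=
  if x == m then hh k else if x.*2 %% m == k then m else (k + m - x) %% m.

Lemma F1 k x y : (x < m)%N -> (y < m)%N ->
  (y == (k + m - x) %% m) = (x + y == k %[mod m]).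
Proof.
move=> hx hy.
rewrite -{1}(modn_small hy) -(eqn_modDr x) subnK; last by lia.
by rewrite modnDr addnC.
Qed.

Lemma pn_le k x : (k < m)%N -> (pn k x <= m)%N.
Proof.
move=> hk; rewrite /pn; case: ifP => _; first by apply: ltnW; apply: hh_lt.
case: ifP => _ //; apply: ltnW; exact: ltn_pmod m_gt0.
Qed.

Lemma pn_neq k x : (k < m)%N -> (x <= m)%N -> pn k x != x.
Proof.
move=> hk hx; rewrite /pn; case: (eqVneq x m) => [->|hxm].
  by rewrite neq_ltn hh_lt.
have hx' : (x < m)%N by lia.
case: ifP => [_|h2]; first by rewrite eq_sym.
apply/negP; rewrite eq_sym F1 //.
by rewrite addnn (modn_small hk) h2.
Qed.

Lemma pn_invol k x : (k < m)%N -> (x <= m)%N -> pn k (pn k x) = x.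
Proof.
move=> hk hx; rewrite {2}/pn; case: eqP => [->|/eqP hxm].
  rewrite /pn; have hl := @hh_lt k hk.
  rewrite ifN_eq ?neq_ltn ?hl //.
  by rewrite hh_dbl (modn_small hk) eqxx.
have hx' : (x < m)%N by lia.
case: ifP => [/eqP h2|h2].
  rewrite /pn eqxx; apply: dbl_inj => //; first exact: hh_lt.
  by rewrite hh_dbl -h2 modn_mod.
set y := (k + m - x) %% m.
have hy : (y < m)%N by exact: ltn_pmod m_gt0.
have hxy : x + y = k %[mod m] by apply/eqP; rewrite -F1.
rewrite /pn ifN_eq ?neq_ltn ?hy //.
case: ifP => [/eqP h3|_].
  have e : y = x.
    have : y + y = x + y %[mod m] by rewrite addnn h3 hxy (modn_small hk).
    by move/eqP; rewrite eqn_modDr !modn_small // => /eqP.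
  by move: h2; rewrite -e h3 eqxx.
by apply/eqP; rewrite eq_sym F1 // addnC; apply/eqP.
Qed.

Lemma pn_ex x y : (x <= m)%N -> (y <= m)%N -> x != y ->
  exists2 k, (k < m)%N & pn k x = y.
Proof.
move=> hx hy hxy.
have hm0 := m_gt0.
case: (eqVneq x m) => [ex|hxm].
  subst x; have hy' : (y < m)%N by lia.
  exists (y.*2 %% m); first exact: ltn_pmod.
  rewrite /pn eqxx; apply: dbl_inj => //; first by apply: hh_lt; exact: ltn_pmod.
  by rewrite hh_dbl; exact: modn_mod.
have hx' : (x < m)%N by lia.
case: (eqVneq y m) => [ey|hym].
  subst y; exists (x.*2 %% m); first exact: ltn_pmod.
  by rewrite /pn ifN_eq // eqxx.
have hy' : (y < m)%N by lia.
exists ((x + y) %% m); first exact: ltn_pmod.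
rewrite /pn ifN_eq // ifN.
  by apply/esym/eqP; rewrite F1 // modn_mod.
apply/negP => /eqP h; move/negP: hxy; apply; apply/eqP.
have : x + x = x + y %[mod m] by rewrite addnn h.
by move/eqP; rewrite eqn_modDl (modn_small hx') (modn_small hy') => /eqP.
Qed.

Lemma pn_inj k k' x : (k < m)%N -> (k' < m)%N -> (x <= m)%N ->
  pn k x = pn k' x -> k = k'.
Proof.
move=> hk hk' hx; rewrite /pn; case: eqP => [_ e|/eqP hxm].
  have : k = k' %[mod m] by rewrite -hh_dbl e hh_dbl.
  by rewrite !modn_small.
have hm0 := m_gt0.
have hx' : (x < m)%N by lia.
have l1 : ((k + m - x) %% m < m)%N by exact: ltn_pmod.
have l2 : ((k' + m - x) %% m < m)%N by exact: ltn_pmod.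
case: ifP => [/eqP h1|h1]; case: ifP => [/eqP h2|h2].
- by rewrite -h1 -h2.
- by move=> e; move: l2; rewrite -e ltnn.
- by move=> e; move: l1; rewrite e ltnn.
move=> e.
have e1 : x + (k + m - x) %% m = k %[mod m] by apply/eqP; rewrite -F1.
have e2 : x + (k' + m - x) %% m = k' %[mod m] by apply/eqP; rewrite -F1.
have : k = k' %[mod m] by rewrite -e1 -e2 e.
by rewrite !modn_small.
Qed.

End Arith.

Local Open Scope ring_scope.

Section Two.
Variable R : realType.

Lemma form2 (B : 'M[R]_2) (v : 'cV[R]_2) :
  (v^T *m B *m v) ord0 ord0 =
  v ord0 ord0 * (B ord0 ord0 * v ord0 ord0 + B ord0 ord_max * v ord_max ord0) +
  v ord_max ord0 * (B ord_max ord0 * v ord0 ord0 + B ord_max ord_max * v ord_max ord0).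
Proof.
rewrite -mulmxA !mxE !big_ord_recl !big_ord0 ?mxE !big_ord_recl !big_ord0.
have -> : (lift ord0 ord0 : 'I_2) = ord_max by apply: val_inj.
by rewrite !addr0.
Qed.

Lemma pd2 (B : 'M[R]_2) : posdef B ->
  [/\ 0 < B ord0 ord0, 0 < B ord0 ord0 * B ord_max ord_max - B ord0 ord_max ^+ 2
    & B ord_max ord0 = B ord0 ord_max].
Proof.
case=> hs hp.
have hsym : B ord_max ord0 = B ord0 ord_max.
  by rewrite -{1}hs mxE.
have ha : 0 < B ord0 ord0.
  have := hp (\col_i (if i == ord0 then 1 else 0)).
  rewrite form2 !mxE /= mul1r mulr1 mulr0 addr0 mul0r addr0.
  apply; apply/negP => /eqP/matrixP/(_ ord0 ord0); rewrite !mxE /=.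
  by move/eqP; rewrite oner_eq0.
split => //.
have := hp (\col_i (if i == ord0 then - B ord0 ord_max else B ord0 ord0)).
rewrite form2 !mxE /= hsym => h.
have : 0 < B ord0 ord0 * (B ord0 ord0 * B ord_max ord_max - B ord0 ord_max ^+ 2).
  apply: lt_le_trans (h _) _.
    apply/negP => /eqP/matrixP/(_ ord_max ord0); rewrite !mxE /=.
    by move/eqP; rewrite (gt_eqF ha).
  by rewrite le_eqVlt; apply/orP; left; apply/eqP; ring.
by rewrite pmulr_rgt0.
Qed.

Lemma qpos (a b d x y : R) : 0 < a -> 0 < a * d - b ^+ 2 ->
  0 <= x * (a * x + b * y) + y * (b * x + d * y) /\
  (x != 0 \/ y != 0 -> 0 < x * (a * x + b * y) + y * (b * x + d * y)).
Proof.
move=> ha hd.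
have key : a * (x * (a * x + b * y) + y * (b * x + d * y)) =
   (a * x + b * y) ^+ 2 + (a * d - b ^+ 2) * y ^+ 2 by ring.
have hge : 0 <= x * (a * x + b * y) + y * (b * x + d * y).
  rewrite -(pmulr_rge0 _ ha) key; apply: addr_ge0; first exact: sqr_ge0.
  by apply: mulr_ge0; [exact: ltW | exact: sqr_ge0].
split => // hxy.
rewrite -(pmulr_rgt0 _ ha) key.
case: (eqVneq y 0) => [y0|yn0].
  case: hxy => [xn|]; last by rewrite y0 eqxx.
  by rewrite y0 !(mulr0, addr0) expr0n /= mulr0 addr0 exprn_even_gt0 //= mulf_neq0 // gt_eqF.
have hy2 : 0 < y ^+ 2 by rewrite exprn_even_gt0 // yn0 orbT.
have := sqr_ge0 (a * x + b * y); nra.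
Qed.
End Two.

Section Matching.
Variables (R : realType) (N : nat) (p : 'I_N -> 'I_N).
Hypothesis hinv : involutive p.
Hypothesis hfix : forall x, p x != x.
Variable A : 'I_N -> 'M[R]_2.
Hypothesis hA : forall i : 'I_N, (i < p i)%N -> posdef (A i).

Lemma lt_p (x : 'I_N) : (p x < x)%N = ~~ (x < p x)%N.
Proof.
have := hfix x; rewrite -val_eqE /=.
by case: (ltngtP x (p x)) => // ->; rewrite eqxx.
Qed.

Definition lo (x : 'I_N) := if (x < p x)%N then x else p x.

Lemma lo_lt (x : 'I_N) : (lo x < p (lo x))%N.
Proof.
rewrite /lo; case: ifP => // h; rewrite hinv lt_p; exact: negbT.
Qed.

Lemma A_sym (i : 'I_N) : (i < p i)%N -> A i ord_max ord0 = A i ord0 ord_max.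
Proof. by move=> h; case: (@pd2 R _ (hA i h)). Qed.

Definition Zm : 'M[R]_N := \sum_(i : 'I_N | (i < p i)%N) Psi_ij i (p i) (A i).

Lemma Zentry x y : Zm x y =
  if y == x then (if (x < p x)%N then A x ord0 ord0 else A (p x) ord_max ord_max)
  else if y == p x then A (lo x) ord0 ord_max else 0.
Proof.
have hxp : (x == p x) = false by rewrite eq_sym; exact: negbTE (hfix x).
rewrite /Zm summxE (bigD1 (lo x)) ?lo_lt //= big1 ?addr0.
  rewrite mxE /lo; case hx: (x < p x)%N.
    by rewrite eqxx /= hxp.
  rewrite hinv hxp /= eqxx /=.
  case: (eqVneq y x) => [e|hyx]; first by rewrite e ?eqxx hxp.
  case: (eqVneq y (p x)) => [e|hyp]; last by [].
  by apply: A_sym; rewrite hinv lt_p hx.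
move=> i /andP [hi hne]; rewrite mxE.
have hxi : (x == i) = false.
  by apply/negbTE/eqP => e; subst x; move: hne; rewrite /lo hi eqxx.
have hxpi : (x == p i) = false.
  by apply/negbTE/eqP => e; subst x; move: hne; rewrite /lo hinv lt_p hi /= eqxx.
by rewrite hxi hxpi /=.
Qed.

Lemma Zd x : Zm x x = if (x < p x)%N then A x ord0 ord0 else A (p x) ord_max ord_max.
Proof. by rewrite Zentry eqxx. Qed.

Lemma Zo x : Zm x (p x) = A (lo x) ord0 ord_max.
Proof. by rewrite Zentry (negbTE (hfix x)) eqxx. Qed.

Lemma Z0 x y : y != x -> y != p x -> Zm x y = 0.
Proof. by move=> h1 h2; rewrite Zentry (negbTE h1) (negbTE h2). Qed.

Lemma lo_p (x : 'I_N) : lo (p x) = lo x.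
Proof.
rewrite /lo hinv lt_p; by case: (x < p x)%N.
Qed.

Lemma Zsym : symmetric_mx Zm.
Proof.
apply/matrixP => x y; rewrite mxE.
case: (eqVneq y x) => [e|hyx]; first by rewrite e.
case: (eqVneq y (p x)) => [e|hyp].
  rewrite e; have h2 := Zo (p x); rewrite hinv lo_p in h2; exact: etrans h2 (esym (Zo x)).
rewrite !Z0 //; first by rewrite eq_sym.
by apply/eqP => e; move: hyp; rewrite e hinv eqxx.
Qed.

Lemma big_pair (T : Type) (idx : T) (op : Monoid.com_law idx) (F : 'I_N -> T) :
  \big[op/idx]_i F i = \big[op/idx]_(i : 'I_N | (i < p i)%N) op (F i) (F (p i)).
Proof.
rewrite (bigID (fun i : 'I_N => (i < p i)%N)) /= big_split /=; congr (op _ _).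
rewrite (reindex_inj (inv_inj hinv)) /=.
by apply: eq_bigl => i; rewrite (hinv i) lt_p negbK.
Qed.


Lemma Zrow x (v : 'cV[R]_N) :
  \sum_k Zm x k * v k ord0 = Zm x x * v x ord0 + Zm x (p x) * v (p x) ord0.
Proof.
rewrite (bigD1 x) //= (bigD1 (p x)) /=; last by rewrite hfix.
rewrite big1 ?addr0 // => k /andP [h1 h2]; by rewrite Z0 ?mul0r.
Qed.

Definition qf (v : 'cV[R]_N) (i : 'I_N) :=
  v i ord0 * (A i ord0 ord0 * v i ord0 + A i ord0 ord_max * v (p i) ord0) +
  v (p i) ord0 * (A i ord0 ord_max * v i ord0 + A i ord_max ord_max * v (p i) ord0).

Lemma Zform (v : 'cV[R]_N) :
  (v^T *m Zm *m v) ord0 ord0 = \sum_(i : 'I_N | (i < p i)%N) qf v i.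
Proof.
rewrite -mulmxA mxE.
rewrite (eq_bigr (fun l => v l ord0 * (Zm l l * v l ord0 + Zm l (p l) * v (p l) ord0))); last first.
  by move=> l _; rewrite !mxE Zrow.
rewrite big_pair /=.
apply: eq_bigr => i hi.
have e1 := Zd (p i); rewrite (hinv i) lt_p hi /= in e1.
have e2 := Zo (p i); rewrite (hinv i) lo_p /lo hi in e2.
rewrite (hinv i) e1 e2 Zd Zo /lo hi /qf; ring.
Qed.

Lemma Zpd : posdef Zm.
Proof.
split; first exact: Zsym.
move=> v hv; rewrite Zform.
have : ~~ [forall x, v x ord0 == 0].
  apply: contra hv => /forallP h; apply/eqP/matrixP => i j.
  by rewrite (ord1 j) mxE; apply/eqP.
case/forallPn => x hx.
have hge : forall i : 'I_N, (i < p i)%N -> 0 <= qf v i.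
  move=> i hi; case: (@pd2 R _ (hA i hi)) => ha hd _.
  by case: (@qpos R _ _ _ (v i ord0) (v (p i) ord0) ha hd).
have hl := lo_lt x.
have pl : 0 < qf v (lo x).
  case: (@pd2 R _ (hA (lo x) hl)) => ha hd _.
  case: (@qpos R _ _ _ (v (lo x) ord0) (v (p (lo x)) ord0) ha hd) => _; apply.
  by rewrite /lo; case: ifP => _; [left | right; rewrite (hinv x)].
rewrite (bigD1 (lo x)) //=; apply: (lt_le_trans pl); rewrite lerDl.
by apply: sumr_ge0 => i /andP [hi _]; exact: hge.
Qed.


Definition Lm : 'M[R]_N := \matrix_(x, y)
  (if y == x then 1 else if (p x < x)%N && (y == p x)
   then A y ord0 ord_max / A y ord0 ord0 else 0).

Definition Um : 'M[R]_N := \matrix_(x, y)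
  (if (x < p x)%N then
     (if y == x then A x ord0 ord0 else if y == p x then A x ord0 ord_max else 0)
   else (if y == x then A (p x) ord_max ord_max -
                         A (p x) ord0 ord_max ^+ 2 / A (p x) ord0 ord0 else 0)).

Lemma a_neq0 (i : 'I_N) : (i < p i)%N -> A i ord0 ord0 != 0.
Proof. by move=> hi; case: (@pd2 R _ (hA i hi)) => ha _ _; rewrite gt_eqF. Qed.

Lemma ZLU : Zm = Lm *m Um.
Proof.
apply/matrixP => x y; rewrite [RHS]mxE.
have hxp : (x == p x) = false by rewrite eq_sym; exact: negbTE (hfix x).
have hpx : (p x == x) = false by exact: negbTE (hfix x).
case hx: (x < p x)%N.
  rewrite (bigD1 x) //= big1 ?addr0.
    by rewrite !mxE eqxx hx mul1r Zentry hx /lo hx.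
  by move=> c hc; rewrite !mxE (negbTE hc) lt_p hx /= mul0r.
have hpx' : (p x < p (p x))%N by rewrite (hinv x) lt_p hx.
rewrite (bigD1 x) //= (bigD1 (p x)) /=; last by rewrite hfix.
rewrite big1 ?addr0; last first.
  by move=> c /andP [h1 h2]; rewrite !mxE (negbTE h1) (negbTE h2) andbF mul0r.
rewrite !mxE eqxx hx hpx lt_p hx /= eqxx hpx' (hinv x) mul1r Zentry hx /lo hx.
have ha := a_neq0 _ hpx'.
case: (eqVneq y x) => [e|hyx].
  rewrite e hxp; field; exact: ha.
case: (eqVneq y (p x)) => [e|hyp].
  field; exact: ha.
by rewrite ?mulr0 ?add0r ?addr0.
Qed.

Lemma detL : \det Lm = 1.
Proof.
rewrite det_trig; first by apply: big1 => i _; rewrite mxE eqxx.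
apply/is_trig_mxP => i j hij; rewrite mxE.
have -> : (j == i) = false by rewrite -val_eqE /= gtn_eqF.
case: eqP => [e|_]; last by rewrite andbF.
by rewrite -e ltnNge (ltnW hij).
Qed.

Lemma detU : \det Um =
  \prod_(i : 'I_N | (i < p i)%N)
     (A i ord0 ord0 * A i ord_max ord_max - A i ord0 ord_max ^+ 2).
Proof.
rewrite -det_tr det_trig; last first.
  apply/is_trig_mxP => i j hij; rewrite !mxE.
  have -> : (i == j) = false by rewrite -val_eqE /= ltn_eqF.
  case: ifP => // hj.
  have -> : (i == p j) = false.
    by rewrite -val_eqE /= ltn_eqF // (ltn_trans hij hj).
  by [].
rewrite big_pair; apply: eq_bigr => i hi.
have ha := a_neq0 _ hi.
rewrite !mxE eqxx hi (hinv i) lt_p hi /= eqxx; field; exact: ha.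
Qed.

Lemma detZ : \det Zm =
  \prod_(i : 'I_N | (i < p i)%N)
     (A i ord0 ord0 * A i ord_max ord_max - A i ord0 ord_max ^+ 2).
Proof. by rewrite ZLU det_mulmx detL mul1r detU. Qed.

End Matching.

Section Final.
Variable R : realType.

Lemma partition_sum (V : nmodType) (N m : nat) (p : 'I_m -> 'I_N -> 'I_N)
  (hex : forall i j, i != j -> exists k, p k i = j)
  (hinj : forall k k' i, p k i = p k' i -> k = k')
  (F : 'I_N -> 'I_N -> V) :
  \sum_(i < N) \sum_(j < N | (i < j)%N) F i j =
  \sum_(k < m) \sum_(i : 'I_N | (i < p k i)%N) F i (p k i).
Proof.
symmetry.
transitivity (\sum_(k < m) \sum_(i < N) \sum_(j < N | (i < j)%N)
                 (if p k i == j then F i j else 0)).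
  apply: eq_bigr => k _; rewrite big_mkcond /=; apply: eq_bigr => i _.
  case h: (i < p k i)%N.
    rewrite (bigD1 (p k i)) //= eqxx big1 ?addr0 // => j /andP [_ hj].
    by rewrite eq_sym (negbTE hj).
  rewrite big1 // => j hj; case: eqP => // e.
  by move: hj; rewrite -e h.
rewrite exchange_big; apply: eq_bigr => i _.
rewrite exchange_big; apply: eq_bigr => j hij.
have hne : i != j by rewrite -val_eqE /= ltn_eqF.
have [k0 e] := hex _ _ hne.
rewrite (bigD1 k0) //= e eqxx big1 ?addr0 // => k hk.
case: eqP => // e'; move: hk; rewrite (hinj k k0 i) ?eqxx //.
by rewrite e e'.
Qed.

Lemma ln_prod (I : finType) (P : pred I) (f : I -> R) :
  (forall i, P i -> 0 < f i) ->
  ln (\prod_(i | P i) f i) = \sum_(i | P i) ln (f i).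
Proof.
move=> hf.
pose K := fun (s q : R) => 0 < q /\ ln q = s.
suff : K (\sum_(i | P i) ln (f i)) (\prod_(i | P i) f i) by case.
apply: big_rec2 => [|i s q hi [hq <-]]; first by split; [exact: ltr01 | exact: ln1].
split; first by apply: mulr_gt0 => //; exact: hf.
by rewrite lnM // posrE ?hf.
Qed.

Lemma main_even (n : nat) (M : 'I_n.+2 -> 'I_n.+2 -> 'M[R]_2) :
  odd n.+1 ->
  (forall i j : 'I_n.+2, (i < j)%N -> posdef (M i j)) ->
  exists Z : 'I_n.+1 -> 'M[R]_n.+2,
    (forall k, posdef (Z k)) /\
    Psi M = \sum_(k < n.+1) Z k /\
    phi_SDD M = \sum_(k < n.+1) ln (\det (Z k)).
Proof.
move=> hodd hpd.
pose pp (k : 'I_n.+1) (x : 'I_n.+2) : 'I_n.+2 := inord (pn n.+1 k x).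
have vpp : forall k x, nat_of_ord (pp k x) = pn n.+1 k x.
  by move=> k x; rewrite /pp inordK // ltnS pn_le.
have hinv : forall k, involutive (pp k).
  move=> k x; apply: val_inj; rewrite /= !vpp pn_invol //; last by rewrite -ltnS.
have hfix : forall k x, pp k x != x.
  by move=> k x; rewrite -val_eqE /= vpp pn_neq // -ltnS.
have hex : forall i j, i != j -> exists k, pp k i = j.
  move=> i j hij.
  have hij' : (i : nat) != j by rewrite val_eqE.
  have [k hk e] := @pn_ex n.+1 hodd i j (ltn_ord i : (i <= n.+1)%N) (ltn_ord j : (j <= n.+1)%N) hij'.
  by exists (Ordinal hk); apply: val_inj; rewrite /= vpp.
have hinj : forall k k' i, pp k i = pp k' i -> k = k'.
  move=> k k' i /(congr1 val) /=; rewrite !vpp => e; apply: val_inj.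
  exact: (@pn_inj n.+1 hodd k k' i (ltn_ord k) (ltn_ord k') (ltn_ord i : (i <= n.+1)%N) e).
exists (fun k => @Zm R _ (pp k) (fun i => M i (pp k i))).
split; [|split].
- move=> k; apply: Zpd; [exact: hinv | exact: hfix | move=> i hi; exact: hpd].
- rewrite /Psi (@partition_sum _ _ _ _ hex hinj); apply: eq_bigr => k _; by [].
- rewrite /phi_SDD (@partition_sum _ _ _ _ hex hinj); apply: eq_bigr => k _.
  rewrite detZ; [|exact: hinv | exact: hfix | move=> i hi; exact: hpd].
  rewrite ln_prod // => i hi.
  by case: (@pd2 R _ (hpd i (pp k i) hi)).
Qed.

End Final.

Theorem lemmaA1 (R : realType) (N : nat) (M : 'I_N -> 'I_N -> 'M[R]_2) :
  (2 <= N)%N -> ~~ odd N ->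
  (forall i j : 'I_N, (i < j)%N -> symmetric_mx (M i j)) ->
  SDD (Psi M) ->
  (* phi_SDD(M) finite, i.e. every M_ij is positive definite *)
  (forall i j : 'I_N, (i < j)%N -> posdef (M i j)) ->
  exists Z : 'I_(N.-1) -> 'M[R]_N,
    (forall k, posdef (Z k)) /\
    Psi M = \sum_(k < N.-1) Z k /\
    phi_SDD M = \sum_(k < N.-1) ln (\det (Z k)).
Proof.
case: N M => [|[|n]] M // _ hodd _ _ hpd.
apply: main_even => //.
by move: hodd; rewrite /= negbK.
Qed.
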